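(* Let $k\ge 2$ and let $P=(p_1,\dots,p_k)$ and $Q=(q_1,\dots,q_k)$ be two multinomial (categorical) probability distributions over the same index set $\{1,\dots,k\}$. Suppose the indices of the largest probabilities of $P$ and $Q$ do not match, i.e. $\arg\max_i p_i \neq \arg\max_j q_j$. Then $$d_{B}(Q,P)\;\ge\; -\log\left(\sqrt{\frac{2\sqrt{p_{(1)}p_{(2)}}-p_{(1)}-p_{(2)}+2}{2}}\right),$$ where $p_{(1)}$ and $p_{(2)}$ denote the first and second largest probabilities among $p_1,\dots,p_k$.
   Context: The Bhattacharyya distance is $d_B(Q,P)=-\log\Bigl(\sum_{i=1}^k\sqrt{p_iq_i}\Bigr)$. *)

(* Defs.v *)
From HB Require Import structures.
From mathcomp Require Import all_boot all_order all_algebra.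
From mathcomp Require Import all_classical all_reals all_analysis.
Set Implicit Arguments. Unset Strict Implicit. Unset Printing Implicit Defensive.
Import Order.TTheory GRing.Theory Num.Theory.
Local Open Scope ring_scope.

Definition is_distr (R : realType) (k : nat) (p : 'I_k -> R) : Prop :=
  (forall i, 0 <= p i) /\ \sum_(i < k) p i = 1.

Definition argmax_set (R : realType) (k : nat) (p : 'I_k -> R) : {set 'I_k} :=
  [set i | [forall j, p j <= p i]].

Definition bhat_coef (R : realType) (k : nat) (q p : 'I_k -> R) : R :=
  \sum_(i < k) Num.sqrt (p i * q i).

Definition bhat_dist (R : realType) (k : nat) (q p : 'I_k -> R) : \bar R :=
  if bhat_coef q p == 0 then +oo%E else (- ln (bhat_coef q p))%:E.

Definition sorted_probs (R : realType) (k : nat) (p : 'I_k -> R) : seq R :=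
  sort (fun x y : R => y <= x) [seq p i | i <- enum 'I_k].

Definition p_first (R : realType) (k : nat) (p : 'I_k -> R) : R :=
  nth 0 (sorted_probs p) 0.
Definition p_second (R : realType) (k : nat) (p : 'I_k -> R) : R :=
  nth 0 (sorted_probs p) 1.

(* Main.v *)
Require Import Defs.
From HB Require Import structures.
From mathcomp Require Import all_boot all_order all_algebra.
From mathcomp Require Import all_classical all_reals all_analysis.
Import Order.TTheory GRing.Theory Num.Theory.
Local Open Scope ring_scope.
From mathcomp Require Import ring lra.

Lemma key_ab (R : realType) (k : nat) (p q : 'I_k -> R) (i0 : 'I_k) :
  argmax_set p != argmax_set q ->
  exists a b, [/\ a \in argmax_set p, b != a & q a <= q b].
Proof.
move=> Hne.
case: (boolP [exists a, exists b, [&& a \in argmax_set p, b != a & q a <= q b]]).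
  move=> /existsP[a /existsP[b /and3P[H1 H2 H3]]]; by exists a, b.
move=> Hn.
have H : forall a b, a \in argmax_set p -> b != a -> q b < q a.
  move=> a b Ha Hb; rewrite ltNge; apply/negP => Hq; move/negP: Hn; apply.
  by apply/existsP; exists a; apply/existsP; exists b; rewrite Ha Hb Hq.
have [a0 _ Ha0] := @arg_maxP _ _ _ i0 xpredT p isT.
have Ha0' : a0 \in argmax_set p by rewrite inE; apply/forallP => j; exact: Ha0.
case/negP: Hne; apply/eqP/setP => c.
have -> : (c \in argmax_set p) = (c == a0).
  apply/idP/eqP => [Hc|->//]; apply/eqP; apply/negPn/negP => Hca.
  have h1 : q a0 < q c by apply: H => //; rewrite eq_sym.
  have h2 := H _ _ Ha0' Hca.
  by have := lt_trans h1 h2; rewrite ltxx.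
rewrite inE; apply/eqP/forallP => [-> j|Hc].
  case: (eqVneq j a0) => [->//|hj]; exact: ltW (H _ _ Ha0' hj).
apply/eqP/negPn/negP => Hca.
by have := H _ _ Ha0' Hca; rewrite ltNge Hc.
Qed.

Lemma sorted_facts (R : realType) (k : nat) (p : 'I_k -> R) :
  (2 <= k)%N ->
  [/\ exists i, p_first p = p i, exists i, p_second p = p i,
      p_second p <= p_first p &
      forall a b, a != b -> p a <= p_second p \/ p b <= p_second p].
Proof.
move=> hk.
set r := (fun x y : R => y <= x).
have rtot : total r by move=> x y; rewrite /r orbC le_total.
have rtr : transitive r by move=> x y z; rewrite /r => h1 h2; exact: le_trans h2 h1.
have hperm : perm_eq (sorted_probs p) [seq p i | i <- enum 'I_k] by rewrite /sorted_probs perm_sort.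
have hsort : sorted r (sorted_probs p) by apply: sort_sorted.
have hsize : size (sorted_probs p) = k by rewrite /sorted_probs size_sort size_map size_enum_ord.
have memP : forall x, x \in sorted_probs p -> exists i, x = p i.
  move=> x; rewrite (perm_mem hperm) => /mapP[i _ ->]; by exists i.
rewrite /p_first /p_second.
move: hperm hsort hsize memP; case: (sorted_probs p) => [|s0 [|s1 rest]] //=; try by move=> _ _ h; rewrite -h in hk.
move=> hperm /andP[h01 hpath] hsize memP.
split.
- by apply: memP; rewrite inE eqxx.
- by apply: memP; rewrite !inE eqxx orbT.
- exact: h01.
move=> a b hab.
have hall : all (r s1) rest := order_path_min rtr hpath.
have hc : (count (fun z => (s1 < z)%R) (s0 :: s1 :: rest) <= 1)%N.
  rewrite /= ltxx /= add0n (eqP (_ : count (fun z => (s1 < z)%R) rest == 0%N)).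
    by rewrite addn0; case: (s1 < s0).
  rewrite -leqn0 leqNgt -has_count; apply/negP => /hasP[z zin hz].
  by move/allP: hall => /(_ z zin); rewrite /r leNgt hz.
rewrite ((permP hperm) _) count_map in hc.
case: (leP (p a) s1) => ha; first by left.
case: (leP (p b) s1) => hb; first by right.
exfalso; move: hc; apply/negP; rewrite -ltnNge.
have -> : count (preim p (fun z => (s1 < z)%R)) (enum 'I_k) = #|[pred i | s1 < p i]|.
  rewrite cardE /enum_mem size_filter.
  rewrite count_filter; apply: eq_count => i /=; by rewrite !inE andbT.
apply: (leq_trans _ (subset_leq_card (_ : pred2 a b \subset [pred i | s1 < p i]))).
  by rewrite card2 hab.
by apply/fintype.subsetP => i /= /orP[] /eqP ->; rewrite inE.
Qed.

Lemma core (R : realFieldType) (al be ga de pi1 pi2 s : R) :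
  0 <= be -> be <= pi2 -> pi2 <= pi1 -> pi1 <= al -> 0 <= ga -> ga <= de ->
  0 < s -> s ^+ 2 = 1 - (pi1 - pi2) ^+ 2 / 2 ->
  al * ga + be * de + (1 - al ^+ 2 - be ^+ 2) / (2 * s)
   + (1 - ga ^+ 2 - de ^+ 2) * (s / 2) <= s.
Proof.
move=> h1 h2 h3 h4 h5 h6 hs hT.
have d1 : 0 <= pi1 - pi2 by lra.
have d2 : pi1 - pi2 <= al - be by lra.
have e1 : (pi1 - pi2) ^+ 2 <= (al - be) ^+ 2 by rewrite !expr2; apply: ler_pM.
have f1 : 0 <= s * ((al - be) * (de - ga)) by apply: mulr_ge0; [lra | apply: mulr_ge0; lra].
have e2 : 2 * s * (al * ga + be * de) <= s * (al + be) * (ga + de).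
  rewrite -subr_ge0; have -> : s * (al + be) * (ga + de) - 2 * s * (al * ga + be * de) = s * ((al - be) * (de - ga)) by ring.
  done.
have e3 : s * (al + be) * (ga + de) <= (al + be) ^+ 2 / 2 + s ^+ 2 * (ga + de) ^+ 2 / 2.
  rewrite -subr_ge0; have -> : (al + be) ^+ 2 / 2 + s ^+ 2 * (ga + de) ^+ 2 / 2 - s * (al + be) * (ga + de) = (al + be - s * (ga + de)) ^+ 2 / 2 by field.
  by apply: divr_ge0 => //; apply: sqr_ge0.
have e4 : (ga + de) ^+ 2 <= 2 * (ga ^+ 2 + de ^+ 2).
  rewrite -subr_ge0; have -> : 2 * (ga ^+ 2 + de ^+ 2) - (ga + de) ^+ 2 = (ga - de) ^+ 2 by ring.
  exact: sqr_ge0.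
have e5 : s ^+ 2 * (ga + de) ^+ 2 <= s ^+ 2 * (2 * (ga ^+ 2 + de ^+ 2)) by apply: ler_wpM2l => //; apply: sqr_ge0.
have hs2 : 0 < 2 * s by lra.
rewrite -(ler_pM2l hs2).
have -> : 2 * s * (al * ga + be * de + (1 - al ^+ 2 - be ^+ 2) / (2 * s) + (1 - ga ^+ 2 - de ^+ 2) * (s / 2))
  = 2 * s * (al * ga + be * de) + (1 - al ^+ 2 - be ^+ 2) + (1 - ga ^+ 2 - de ^+ 2) * s ^+ 2.
  field; lra.
nra.
Qed.

Theorem mainTheorem4 (R : realType) (k : nat) (p q : 'I_k -> R) :
  (2 <= k)%N -> is_distr p -> is_distr q ->
  argmax_set p != argmax_set q ->
  ((- ln (Num.sqrt ((2 * Num.sqrt (p_first p * p_second p)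
                     - p_first p - p_second p + 2) / 2)))%:E
   <= bhat_dist q p)%E.
Proof.
move=> hk [hp0 hp1] [hq0 hq1] hne.
have i0 : 'I_k := Ordinal (leq_trans (isT : (0 < 2)%N) hk).
have [a [b [ha hba hqab]]] := @key_ab _ _ p q i0 hne.
have [[i1 e1] [i2 e2] h21 hmin] := @sorted_facts _ _ p hk.
have hamax : forall j, p j <= p a by move: ha; rewrite inE => /forallP.
have hb2 : p b <= p_second p.
  have hab : a != b by rewrite eq_sym.
  by case: (hmin a b hab) => h //; exact: le_trans (hamax b) h.
have hP1 : 0 <= p_first p by rewrite e1.
have hP2 : 0 <= p_second p by rewrite e2.
have h1a : p_first p <= p a by rewrite e1.
have split : forall F : 'I_k -> R, \sum_i F i = F a + F b + \sum_(i | (i != a) && (i != b)) F i.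
  by move=> F; rewrite (bigD1 a) //= (bigD1 b) //= addrA.
set Pr := \sum_(i | (i != a) && (i != b)) p i.
set Qr := \sum_(i | (i != a) && (i != b)) q i.
have hPr : 0 <= Pr by apply: sumr_ge0.
have hQr : 0 <= Qr by apply: sumr_ge0.
have eP : p a + p b + Pr = 1 by rewrite -split.
have eQ : q a + q b + Qr = 1 by rewrite -split.
set al := Num.sqrt (p a). set be := Num.sqrt (p b).
set ga := Num.sqrt (q a). set de := Num.sqrt (q b).
set pi1 := Num.sqrt (p_first p). set pi2 := Num.sqrt (p_second p).
have sal : al ^+ 2 = p a by rewrite sqr_sqrtr.
have sbe : be ^+ 2 = p b by rewrite sqr_sqrtr.
have sga : ga ^+ 2 = q a by rewrite sqr_sqrtr.
have sde : de ^+ 2 = q b by rewrite sqr_sqrtr.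
have spi1 : pi1 ^+ 2 = p_first p by rewrite sqr_sqrtr.
have spi2 : pi2 ^+ 2 = p_second p by rewrite sqr_sqrtr.
have eT : (2 * Num.sqrt (p_first p * p_second p) - p_first p - p_second p + 2) / 2
          = 1 - (pi1 - pi2) ^+ 2 / 2.
  rewrite sqrtrM // -/pi1 -/pi2 -spi1 -spi2; by field.
rewrite eT.
have hbe0 : 0 <= be := sqrtr_ge0 _.
have hga0 : 0 <= ga := sqrtr_ge0 _.
have hpi2 : 0 <= pi2 := sqrtr_ge0 _.
have c1 : be <= pi2 by rewrite ler_sqrt.
have c2 : pi2 <= pi1 by rewrite ler_sqrt.
have c3 : pi1 <= al by rewrite ler_sqrt.
have c4 : ga <= de by rewrite ler_sqrt.
have hx1 : p a <= 1 by have := hp0 b; lra.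
have hT : 1 / 2 <= 1 - (pi1 - pi2) ^+ 2 / 2.
  have : (pi1 - pi2) ^+ 2 <= al ^+ 2.
    rewrite !expr2; apply: ler_pM; lra.
  lra.
set s := Num.sqrt (1 - (pi1 - pi2) ^+ 2 / 2).
have hs : 0 < s by rewrite sqrtr_gt0; lra.
have hs2 : s ^+ 2 = 1 - (pi1 - pi2) ^+ 2 / 2 by rewrite sqr_sqrtr //; lra.
have hBC : bhat_coef q p <= s.
  rewrite /bhat_coef split.
  apply: le_trans (@core _ _ _ _ _ _ _ _ hbe0 c1 c2 c3 hga0 c4 hs hs2).
  rewrite sqrtrM // sqrtrM // -/al -/be -/ga -/de -[X in _ <= X]addrA lerD2l.
  have -> : 1 - al ^+ 2 - be ^+ 2 = Pr by lra.
  have -> : 1 - ga ^+ 2 - de ^+ 2 = Qr by lra.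
  rewrite /Pr /Qr mulr_suml mulr_suml -big_split /=.
  apply: ler_sum => i _.
  rewrite sqrtrM //.
  have hq := sqr_sqrtr (hq0 i). have hpp := sqr_sqrtr (hp0 i).
  move: (Num.sqrt (p i)) (Num.sqrt (q i)) hq hpp => P Q <- <-.
  rewrite -subr_ge0.
  have -> : P ^+ 2 / (2 * s) + Q ^+ 2 * (s / 2) - P * Q = (P - s * Q) ^+ 2 / (2 * s) by field; lra.
  by apply: divr_ge0; [apply: sqr_ge0 | lra].
rewrite /bhat_dist; case: ifP => [_|hne0]; first by rewrite leey.
have hBC0 : 0 < bhat_coef q p.
  rewrite lt_def hne0 /=; apply: sumr_ge0 => i _; exact: sqrtr_ge0.
rewrite lee_fin lerN2 ler_ln ?posrE //.
Qed.
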